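(* Let $P$ be a codirected poset and $M\colon P\to\mathbf{Vec}$ a pointwise finite-dimensional persistence module with $M_p\neq 0$ for all $p\in P$ and such that $M(p\le q)\colon M_p\to M_q$ is injective for all $p\le q$. Then there is a monomorphism $k_P\hookrightarrow M$. If moreover $P$ is directed, then $M$ has a direct summand isomorphic to $k_P$.
   Context: $P$ is codirected if for all $p,q\in P$ there is $c\in P$ with $c\le p,q$; directed if for all $p,q$ there is $c$ with $p,q\le c$. Persistence modules over $P$ are functors $P\to\mathbf{Vec}$ with structure maps $M(p\le q)$. $k_P$ is the module with $k$ at every point and identity structure maps. A monomorphism is a pointwise injective morphism. *)

(* Defs.v *)
(* Persistence modules over a poset P with values in
   finite-dimensional K-vector spaces (vectType K). *)
From HB Require Import structures.
From mathcomp Require Import all_boot all_order all_algebra.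
Set Implicit Arguments. Unset Strict Implicit. Unset Printing Implicit Defensive.
Import Order.TTheory GRing.Theory.
Local Open Scope ring_scope.

Definition codirected (d : Order.disp_t) (P : porderType d) : Prop :=
  forall p q : P, exists c : P, (c <= p)%O /\ (c <= q)%O.
Definition directed (d : Order.disp_t) (P : porderType d) : Prop :=
  forall p q : P, exists c : P, (p <= c)%O /\ (q <= c)%O.

Record pmod (K : fieldType) (d : Order.disp_t) (P : porderType d) := PMod {
  pm_obj : P -> vectType K;
  pm_map : forall p q : P, (p <= q)%O -> 'Hom(pm_obj p, pm_obj q) }.
Arguments pm_map {K d P} p0 {p q} _.
Arguments pm_obj {K d P} p0 p.

Definition is_pmod K d (P : porderType d) (M : pmod K P) : Prop :=
  (forall (p : P) (h : (p <= p)%O), pm_map M h = \1%VF) /\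
  (forall (p q r : P) (hpq : (p <= q)%O) (hqr : (q <= r)%O) (hpr : (p <= r)%O),
      pm_map M hpr = (pm_map M hqr \o pm_map M hpq)%VF).

Definition is_natural K d (P : porderType d) (M N : pmod K P)
  (f : forall p : P, 'Hom(pm_obj M p, pm_obj N p)) : Prop :=
  forall (p q : P) (h : (p <= q)%O), (pm_map N h \o f p = f q \o pm_map M h)%VF.

Definition is_mono K d (P : porderType d) (M N : pmod K P)
  (f : forall p : P, 'Hom(pm_obj M p, pm_obj N p)) : Prop :=
  is_natural f /\ forall p : P, injective (fun v => f p v).

Definition pmod_iso K d (P : porderType d) (M N : pmod K P) : Prop :=
  exists (f : forall p : P, 'Hom(pm_obj M p, pm_obj N p))
         (g : forall p : P, 'Hom(pm_obj N p, pm_obj M p)),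
    [/\ is_natural f, is_natural g,
        forall p, (g p \o f p = \1)%VF & forall p, (f p \o g p = \1)%VF].

Definition constP (K : fieldType) d (P : porderType d) : pmod K P :=
  @PMod K d P (fun _ => (K^o : vectType K)) (fun p q _ => \1%VF).

Definition dsum K d (P : porderType d) (M N : pmod K P) : pmod K P :=
  @PMod K d P (fun p => ((pm_obj M p * pm_obj N p)%type : vectType K))
    (fun p q h => linfun (fun x : (pm_obj M p * pm_obj N p)%type =>
                            (pm_map M h x.1, pm_map N h x.2))).

(* Main.v *)
Require Import Defs.
From HB Require Import structures.
From mathcomp Require Import all_boot all_order all_algebra.
From mathcomp Require Import boolp classical_sets.
Import Order.TTheory GRing.Theory.
Set Implicit Arguments. Unset Strict Implicit.
Local Open Scope ring_scope.
Lemma zorn_fam (I : Type) (X : I -> Type) (Q : (forall i, X i -> Prop) -> Prop) :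
  (forall (J : Type) (G : J -> forall i, X i -> Prop),
     (forall j, Q (G j)) ->
     (forall j k, (forall i x, G j i x -> G k i x) \/ (forall i x, G k i x -> G j i x)) ->
     Q (fun i x => exists j, G j i x)) ->
  exists A, Q A /\ forall B, Q B -> (forall i x, A i x -> B i x) -> forall i x, B i x -> A i x.
Proof.
move=> hch.
pose Q' := fun S : set {i : I & X i} => Q (fun i x => S (existT _ i x)).
have [A [QA Amax]] : exists A : set {i : I & X i},
   Q' A /\ (forall B : set {i : I & X i}, (A `<` B)%classic -> ~ Q' B).
  apply: Zorn_bigcup => F FQ Ftot.
  pose G := fun (j : {S | F S}) i x => proj1_sig j (existT _ i x).
  have := hch _ G.
  have -> : (fun i x => exists j, G j i x) = (fun i x => (\bigcup_(X0 in F) X0)%classic (existT _ i x)).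
    apply: functional_extensionality_dep => i; apply: functional_extensionality_dep => x.
    apply: propositional_extensionality; split.
      by case=> [[S FS]] /= Sx; exists S.
    by case=> S FS Sx; exists (exist _ S FS).
  apply.
    by case=> S FS; apply: FQ.
  case=> S FS [S' FS'] /=.
  have [h|h] := Ftot S S' FS FS'.
    by left=> i x; apply: h.
  by right=> i x; apply: h.
exists (fun i x => A (existT _ i x)); split => // B QB AB i x Bix.
pose B' := fun t : {i : I & X i} => B (projT1 t) (projT2 t).
have [//|nA] := pselect (A (existT _ i x)).
exfalso; apply: (Amax B') => //; split.
  by case=> j y /= Ay; apply: AB.
by move=> sub; apply: nA; apply: sub.
Qed.
Lemma linfunE' (K : fieldType) (aT rT : vectType K) (f : aT -> rT) (lf : linear f) x :
  linfun f x = f x.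
Proof.
pose F : {linear aT -> rT} := HB.pack f (GRing.isLinear.Build _ _ _ _ f lf).
exact: (lfunE F x).
Qed.

Section Main.
Variables (K : fieldType) (d : Order.disp_t) (P : porderType d) (M : pmod K P).
Hypothesis HM : is_pmod M.
Hypothesis Hcod : codirected P.
Hypothesis Hdim : forall p : P, \dim (fullv : {vspace pm_obj M p}) != 0%N.
Hypothesis Hinj : forall (p q : P) (h : (p <= q)%O), injective (fun v => pm_map M h v).
Variable p1 : P.

Local Notation Mm h := (pm_map M h).
Local Notation D p := (\dim (fullv : {vspace pm_obj M p})).

Lemma Mcomp (p q r : P) (hpq : (p <= q)%O) (hqr : (q <= r)%O) (hpr : (p <= r)%O) x :
  Mm hpr x = Mm hqr (Mm hpq x).
Proof. by rewrite (HM.2 p q r hpq hqr hpr) comp_lfunE. Qed.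

Lemma Mid (p : P) (h : (p <= p)%O) x : Mm h x = x.
Proof. by rewrite HM.1 id_lfunE. Qed.

Lemma Meq0 (p q : P) (h : (p <= q)%O) x : Mm h x = 0 -> x = 0.
Proof. by move=> e; apply: (@Hinj _ _ h x 0); rewrite /= e linear0. Qed.

Lemma kerM0 (p q : P) (h : (p <= q)%O) : lker (Mm h) = 0%VS.
Proof. by apply/eqP/lker0P => x y; apply: (@Hinj _ _ h). Qed.

Lemma dim_le (p q : P) (h : (p <= q)%O) : (D p <= D q)%N.
Proof.
rewrite -(limg_dim_eq (f := Mm h)); last by rewrite kerM0 capv0.
exact: dimvS (subvf _).
Qed.

Lemma surjM (p q : P) (h : (p <= q)%O) : (D q <= D p)%N -> forall w, exists y, Mm h y = w.
Proof.
move=> le w.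
have e : (Mm h @: fullv)%VS == fullv.
  by rewrite eqEdim subvf (limg_dim_eq (f := Mm h)) // kerM0 capv0.
have : w \in (Mm h @: fullv)%VS by rewrite (eqP e) memvf.
by case/memv_imgP => u _ ->; exists u.
Qed.

Lemma exists_min : exists p0 : P, forall p, (D p0 <= D p)%N.
Proof.
suff H : forall n (p : P), (D p <= n)%N -> exists p0 : P, forall q, (D p0 <= D q)%N.
  exact: (H _ p1 (leqnn _)).
elim=> [|n IH] p hp.
  by exists p => q; rewrite (leq_trans hp).
have [all|] := pselect (forall q, (D p <= D q)%N); first by exists p.
move/existsNP => [q hq]; apply: (IH q).
by move/negP: hq; rewrite -ltnNge => hq; rewrite -ltnS (leq_trans hq).
Qed.


Definition p0 : P := sval (cid exists_min).
Lemma p0_min p : (D p0 <= D p)%N.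
Proof. exact: (svalP (cid exists_min) p). Qed.
Definition w0 : pm_obj M p0 := vpick fullv.
Lemma w0_neq0 : w0 != 0.
Proof. by rewrite vpick0 -dimv_eq0 Hdim. Qed.
Lemma below_surj (c : P) (h : (c <= p0)%O) w : exists y, Mm h y = w.
Proof. by apply: surjM; apply: p0_min. Qed.

Definition good (p : P) (x : pm_obj M p) :=
  exists c (hc : (c <= p)%O) (hc0 : (c <= p0)%O) y, Mm hc0 y = w0 /\ Mm hc y = x.
Arguments good : clear implicits.

Lemma good_ex p : exists x, good p x.
Proof.
have [c [hc hc0]] := Hcod p p0.
have [y hy] := below_surj hc0 w0.
by exists (Mm hc y), c, hc, hc0, y.
Qed.

Lemma good_uniq p x x' : good p x -> good p x' -> x = x'.
Proof.
move=> [c [hc [hc0 [y [hy <-]]]]] [c' [hc' [hc0' [y' [hy' <-]]]]].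
have [e [ec ec']] := Hcod c c'.
have he0 : (e <= p0)%O := le_trans ec hc0.
have [z hz] := below_surj he0 w0.
have ey : y = Mm ec z.
  have E : Mm hc0 y = Mm hc0 (Mm ec z) by rewrite -(Mcomp ec hc0 he0) hz hy.
  exact: (@Hinj _ _ hc0 _ _ E).
have ey' : y' = Mm ec' z.
  have E : Mm hc0' y' = Mm hc0' (Mm ec' z) by rewrite -(Mcomp ec' hc0' he0) hz hy'.
  exact: (@Hinj _ _ hc0' _ _ E).
have hep : (e <= p)%O := le_trans ec hc.
by rewrite ey ey' -(Mcomp ec hc hep) -(Mcomp ec' hc' hep).
Qed.

Definition vv (p : P) : pm_obj M p := sval (cid (good_ex p)).
Lemma vv_good p : good p (vv p).
Proof. exact: (svalP (cid (good_ex p))). Qed.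

Lemma vv_nat (p q : P) (h : (p <= q)%O) : Mm h (vv p) = vv q.
Proof.
apply: good_uniq (vv_good q).
have [c [hc [hc0 [y [hy <-]]]]] := vv_good p.
have hcq : (c <= q)%O := le_trans hc h.
by exists c, hcq, hc0, y; split => //; rewrite -(Mcomp hc h hcq).
Qed.

Lemma vv_neq0 p : vv p != 0.
Proof.
have [c [hc [hc0 [y [hy e]]]]] := vv_good p.
apply/eqP => e0; rewrite e0 in e.
move: (Meq0 e) => y0; move: hy; rewrite y0 linear0 => /esym/eqP.
by rewrite (negbTE w0_neq0).
Qed.

Definition f1 (p : P) : 'Hom(pm_obj (constP K P) p, pm_obj M p) :=
  linfun (fun k : K^o => k *: vv p).

Lemma f1E p (k : K) : f1 p k = k *: vv p.
Proof. by rewrite /f1 linfunE' // => a x y; rewrite scalerDl scalerA. Qed.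

Lemma part1 : exists f : forall p : P, 'Hom(pm_obj (constP K P) p, pm_obj M p), is_mono f.
Proof.
exists f1; split.
  move=> p q h; apply/lfunP => k.
  by rewrite !comp_lfunE /= id_lfunE !f1E linearZ /= vv_nat.
move=> p k k' /=; rewrite !f1E => /eqP; rewrite -subr_eq0 -scalerBl scaler_eq0.
by rewrite (negbTE (vv_neq0 p)) orbF subr_eq0 => /eqP.
Qed.


Hypothesis Hdir : directed P.

Definition valid (H : forall p : P, pm_obj M p -> Prop) :=
  [/\ (forall p x y, H p x -> H p y -> H p (x + y)),
      (forall p (a : K) x, H p x -> H p (a *: x)),
      (forall p q (h : (p <= q)%O) x, H q (Mm h x) <-> H p x) &
      (forall p, ~ H p (vv p))].

Lemma exists_H : exists H, valid H /\ forall B, valid B ->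
   (forall p x, H p x -> B p x) -> forall p x, B p x -> H p x.
Proof.
apply: zorn_fam => J G vG chain; split.
- move=> p x y [j hx] [k hy].
  case: (chain j k) => s.
    by exists k; have [a _ _ _] := vG k; apply: a => //; apply: s.
  by exists j; have [a _ _ _] := vG j; apply: a => //; apply: s.
- by move=> p a x [j hx]; exists j; have [_ b _ _] := vG j; apply: b.
- move=> p q h x; split.
    by move=> [j hx]; exists j; have [_ _ c _] := vG j; apply/(c _ _ h).
  by move=> [j hx]; exists j; have [_ _ c _] := vG j; apply/(c _ _ h).
- by move=> p [j hj]; have [_ _ _ e] := vG j; apply: (e p).
Qed.

Definition HH := sval (cid exists_H).
Arguments HH : clear implicits.
Lemma HH_valid : valid HH.
Proof. exact: (svalP (cid exists_H)).1. Qed.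
Lemma HH_max B : valid B -> (forall p x, HH p x -> B p x) -> forall p x, B p x -> HH p x.
Proof. exact: (svalP (cid exists_H)).2. Qed.

Lemma HH_zero p : HH p 0.
Proof.
have [Hadd Hsc Hsat Hv] := HH_valid.
pose B := fun p (x : pm_obj M p) => HH p x \/ x = 0.
apply: (@HH_max B); last by right.
  split.
  - move=> q x y [hx|->] [hy|->].
    + by left; apply: Hadd.
    + by left; rewrite addr0.
    + by left; rewrite add0r.
    + by right; rewrite addr0.
  - by move=> q a x [hx|->]; [left; apply: Hsc | right; rewrite scaler0].
  - move=> q r h x; split.
      by move=> [hx|e]; [left; apply/(Hsat _ _ h) | right; apply: (Meq0 e)].
    by move=> [hx|->]; [left; apply/(Hsat _ _ h) | right; rewrite linear0].
  - by move=> q [hx|e]; [apply: (Hv q) | move: (vv_neq0 q); rewrite e eqxx].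
by move=> q x hx; left.
Qed.

Lemma key p x : exists c : K, HH p (x - c *: vv p).
Proof.
have [//|/forallNP nx] := pselect (exists c : K, HH p (x - c *: vv p)).
exfalso.
have [Hadd Hsc Hsat Hv] := HH_valid.
have push : forall (r r' : P) (h : (r <= r')%O) z, HH r z -> HH r' (Mm h z).
  by move=> r r' h z hz; apply/(Hsat _ _ h).
pose B := fun q (y : pm_obj M q) => exists r (hp : (p <= r)%O) (hq : (q <= r)%O) (c : K),
   HH r (Mm hq y - c *: Mm hp x).
have shift : forall q (y : pm_obj M q) r (hp : (p <= r)%O) (hq : (q <= r)%O) c r'
    (h : (r <= r')%O) (hp' : (p <= r')%O) (hq' : (q <= r')%O),
    HH r (Mm hq y - c *: Mm hp x) -> HH r' (Mm hq' y - c *: Mm hp' x).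
  move=> q y r hp hq c r' h hp' hq' H1.
  by have := push _ _ h _ H1; rewrite linearB linearZ /= -!(Mcomp _ h).
have vB : valid B.
  split.
  - move=> q y1 y2 [r1 [hp1 [hq1 [c1 H1]]]] [r2 [hp2 [hq2 [c2 H2]]]].
    have [r [h1 h2]] := Hdir r1 r2.
    have hp : (p <= r)%O := le_trans hp1 h1.
    have hq : (q <= r)%O := le_trans hq1 h1.
    exists r, hp, hq, (c1 + c2).
    have := Hadd _ _ _ (shift _ _ _ _ _ _ _ h1 hp hq H1) (shift _ _ _ _ _ _ _ h2 hp hq H2).
    by rewrite linearD scalerDl opprD addrACA.
  - move=> q a y [r [hp [hq [c H1]]]]; exists r, hp, hq, (a * c).
    by rewrite [Mm hq _]linearZ /= -scalerA -scalerBr; apply: Hsc.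
  - move=> q q' h y; split.
      move=> [r [hp [hq' [c H1]]]]; exists r, hp, (le_trans h hq'), c.
      by rewrite (Mcomp h hq').
    move=> [r [hp [hq [c H1]]]].
    have [r' [hr hq'r']] := Hdir r q'.
    exists r', (le_trans hp hr), hq'r', c.
    rewrite -(Mcomp h hq'r' (le_trans hq hr)).
    exact: (shift _ _ _ _ _ _ _ hr _ _ H1).
  - move=> q [r [hp [hq [c H1]]]].
    rewrite vv_nat in H1.
    have [c0|cn0] := eqVneq c 0.
      by move: H1; rewrite c0 scale0r subr0; apply: Hv.
    have := Hsc _ (- c^-1) _ H1.
    have -> : - c^-1 *: (vv r - c *: Mm hp x) = Mm hp (x - c^-1 *: vv p).
      rewrite [in X in _ = X]linearB /= [in X in _ = X]linearZ /= vv_nat scalerBr scalerA mulNr mulVf //.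
      by rewrite scaleN1r opprK scaleNr addrC.
    by move/(Hsat _ _ hp); apply: nx.
have hB : B p x.
  exists p, (lexx p), (lexx p), 1.
  by rewrite scale1r subrr; apply: HH_zero.
apply: (nx 0); rewrite scale0r subr0; apply: (HH_max vB) hB => q y hy. have [r [hp hq]] := Hdir p q.
exists r, hp, hq, 0; rewrite scale0r subr0.
exact: push.
Qed.


Lemma HH_uniq p x c c' : HH p (x - c *: vv p) -> HH p (x - c' *: vv p) -> c = c'.
Proof.
have [Hadd Hsc Hsat Hv] := HH_valid.
move=> h1 h2; apply/eqP; apply: contraT => ne.
have h3 := Hadd _ _ _ h2 (Hsc _ (-1) _ h1).
have : (x - c' *: vv p) + (-1) *: (x - c *: vv p) = (c - c') *: vv p.
  by rewrite scaleN1r opprB addrC addrA subrK scalerBl.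
move=> e; rewrite e in h3.
have := Hsc _ (c - c')^-1 _ h3.
by rewrite scalerA mulVf ?subr_eq0 // scale1r => /Hv.
Qed.

Definition phi p (x : pm_obj M p) : K := sval (cid (key x)).
Arguments phi : clear implicits.
Lemma phiP p x : HH p (x - phi p x *: vv p).
Proof. exact: (svalP (cid (key x))). Qed.
Lemma phi_uniq p x c : HH p (x - c *: vv p) -> phi p x = c.
Proof. by move=> h; apply: HH_uniq (phiP x) h. Qed.

Lemma phi_lin p : linear (phi p : pm_obj M p -> K^o).
Proof.
have [Hadd Hsc Hsat Hv] := HH_valid.
move=> a x y; apply: phi_uniq.
have := Hadd _ _ _ (Hsc _ a _ (phiP x)) (phiP y).
congr (HH p _).
rewrite scalerBr scalerA [in RHS]scalerDl.
rewrite opprD addrACA //.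
Qed.

Lemma phi_v p : phi p (vv p) = 1.
Proof. by apply: phi_uniq; rewrite scale1r subrr; apply: HH_zero. Qed.

Lemma phi_nat p q (h : (p <= q)%O) x : phi q (Mm h x) = phi p x.
Proof.
have [Hadd Hsc Hsat Hv] := HH_valid.
apply: phi_uniq.
have -> : Mm h x - phi p x *: vv q = Mm h (x - phi p x *: vv p).
  by rewrite [in X in _ = X]linearB /= [Mm h (_ *: _)]linearZ /= vv_nat.
exact: (Hsat _ _ h _).2 (phiP x).
Qed.


Definition g p : 'Hom(pm_obj M p, K^o) := linfun (phi p : pm_obj M p -> K^o).
Lemma gE p x : g p x = phi p x.
Proof. exact: linfunE' (@phi_lin p) x. Qed.

Lemma in_ker p (x : pm_obj M p) : (x \in lker (g p)) = (phi p x == 0).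
Proof. by rewrite memv_ker gE. Qed.

Lemma val_ker p (n : subvs_of (lker (g p))) : phi p (vsval n) = 0.
Proof. by apply/eqP; rewrite -in_ker subvsP. Qed.

Lemma Mh_in p q (h : (p <= q)%O) (n : subvs_of (lker (g p))) :
  Mm h (vsval n) \in lker (g q).
Proof. by rewrite in_ker phi_nat val_ker. Qed.

Lemma proj_in p (x : pm_obj M p) : x - phi p x *: vv p \in lker (g p).
Proof. by rewrite in_ker; apply/eqP/phi_uniq; rewrite scale0r subr0; apply: phiP. Qed.

Definition Nmap p q (h : (p <= q)%O) :
  'Hom(subvs_of (lker (g p)), subvs_of (lker (g q))) :=
  linfun (fun n : subvs_of (lker (g p)) => vsproj (lker (g q)) (Mm h (vsval n))).

Lemma NmapE p q (h : (p <= q)%O) n : vsval (Nmap h n) = Mm h (vsval n).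
Proof.
rewrite /Nmap linfunE'; first by rewrite vsprojK // Mh_in.
by move=> a x y; rewrite !linearP.
Qed.

Definition NN : pmod K P :=
  @PMod K d P (fun p => (subvs_of (lker (g p)) : vectType K)) (fun p q h => Nmap h).

Lemma NN_pmod : is_pmod NN.
Proof.
split.
  move=> p h; apply/lfunP => n; rewrite id_lfunE.
  by apply: (can_inj (@vsvalK _ _ _)); rewrite /= NmapE Mid.
move=> p q r hpq hqr hpr; apply/lfunP => n; rewrite comp_lfunE.
by apply: (can_inj (@vsvalK _ _ _)); rewrite /= !NmapE (Mcomp hpq hqr).
Qed.

Lemma dsumE p q (h : (p <= q)%O) (z : pm_obj (dsum (constP K P) NN) p) :
  pm_map (dsum (constP K P) NN) h z = (z.1, Nmap h z.2).
Proof.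
rewrite /= linfunE' /=; first by rewrite id_lfunE.
by move=> a [x1 x2] [y1 y2] /=; rewrite !linearP.
Qed.


Definition FF p : 'Hom(pm_obj M p, pm_obj (dsum (constP K P) NN) p) :=
  linfun (fun x : pm_obj M p =>
    ((phi p x : K^o), vsproj (lker (g p)) (x - phi p x *: vv p))
      : pm_obj (dsum (constP K P) NN) p).

Lemma FFE p x : FF p x = ((phi p x : K^o), vsproj (lker (g p)) (x - phi p x *: vv p)).
Proof.
rewrite /FF linfunE' // => a x1 y1.
rewrite (@phi_lin p) /=; congr (_, _).
have sc : forall (u : K^o) (w : subvs_of (lker (g p))),
  (a *: ((u, w) : pm_obj (dsum (constP K P) NN) p)).2 = a *: w by [].
rewrite sc -linearP; congr (vsproj _ _).
by rewrite scalerBr scalerA scalerDl opprD addrACA.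
Qed.

Definition GG p : 'Hom(pm_obj (dsum (constP K P) NN) p, pm_obj M p) :=
  linfun (fun z : pm_obj (dsum (constP K P) NN) p => (z.1 : K) *: vv p + vsval z.2).

Lemma GGE p z : GG p z = (z.1 : K) *: vv p + vsval z.2.
Proof.
rewrite /GG linfunE' // => a [x1 x2] [y1 y2] /=.
by rewrite scalerDl [in X in _ = X]scalerDr [in X in _ = X]scalerA addrACA.
Qed.

Lemma part2 : exists N : pmod K P, is_pmod N /\ pmod_iso M (dsum (constP K P) N).
Proof.
exists NN; split; first exact: NN_pmod.
exists FF, GG; split.
- move=> p q h; apply/lfunP => x; rewrite !comp_lfunE dsumE !FFE /= phi_nat.
  congr (_, _); apply: (can_inj (@vsvalK _ _ _)).
  rewrite NmapE vsprojK ?proj_in // vsprojK; last by rewrite -(phi_nat h) proj_in.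
  by rewrite [in X in X = _]linearB /= [Mm h (_ *: _)]linearZ /= vv_nat.
- move=> p q h; apply/lfunP => z; rewrite !comp_lfunE dsumE !GGE /= NmapE.
  by rewrite linearD /= [Mm h (_ *: _)]linearZ /= vv_nat.
- move=> p; apply/lfunP => x; rewrite comp_lfunE id_lfunE FFE GGE /=.
  by rewrite vsprojK ?proj_in // addrC subrK.
- move=> p; apply/lfunP => [[c n]]; rewrite comp_lfunE id_lfunE GGE FFE /=.
  have e : phi p (c *: vv p + vsval n) = c.
    apply: phi_uniq; rewrite addrAC subrr add0r.
    by have := phiP (vsval n); rewrite val_ker scale0r subr0.
  by rewrite e addrAC subrr add0r vsvalK.
Qed.

End Main.

Theorem lemma2p2 (K : fieldType) (d : Order.disp_t) (P : porderType d)
  (M : pmod K P) :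
  is_pmod M ->
  codirected P ->
  (forall p : P, \dim (fullv : {vspace pm_obj M p}) != 0%N) ->
  (forall (p q : P) (h : (p <= q)%O), injective (fun v => pm_map M h v)) ->
  (exists f : forall p : P, 'Hom(pm_obj (constP K P) p, pm_obj M p), is_mono f) /\
  (directed P ->
   exists N : pmod K P, is_pmod N /\ pmod_iso M (dsum (constP K P) N)).
Proof.
move=> HM Hcod Hdim Hinj.
have [[p1 _]|emp] := pselect (exists p : P, True).
  split; first exact: (part1 HM Hcod Hdim Hinj p1).
  by move=> Hdir; exact: (part2 HM Hcod Hdim Hinj p1 Hdir).
have E : forall p : P, False by move=> p; apply: emp; exists p.
split.
  by exists (fun p => 0%R); split => p; case: (E p).
move=> _; exists M; split => //.
by exists (fun p => 0%R), (fun p => 0%R); split => p; case: (E p).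
Qed.
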